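(* Let $\mathcal{H}$ be an effective ample second countable Hausdorff groupoid with $\mathcal{H}^{(0)}$ a locally compact Cantor space. Then $\mathcal{H}$ embeds into $\mathcal{G}_{E_2}$ if and only if $\mathcal{H}\times\mathcal{R}$ embeds into $\mathcal{G}_{E_2}$.
   Context: ''Embeds'' means there is an injective étale homomorphism (groupoid homomorphism that is a local homeomorphism). Ample: étale with unit space Hausdorff with a basis of compact open sets; effective: interior of the isotropy $\{g:s(g)=r(g)\}$ equals the unit space. A locally compact Cantor space is a non-empty second countable Hausdorff space with a basis of compact open sets and no isolated points. $\mathcal{R}=\mathbb{N}\times\mathbb{N}$ with the discrete topology, $(k,m)(m,n)=(k,n)$, $(m,n)^{-1}=(n,m)$; $\mathcal{H}\times\mathcal{R}$ is the product groupoid. $E_2$ is the graph with one vertex $v$ and two loops $a,b$; $E_2^\infty$ is the space of infinite words in $\{a,b\}$ with the cylinder topology, $\sigma$ the shift, and $\mathcal{G}_{E_2}=\{(x,m-n,y):x,y\in E_2^\infty, m,n\ge0,\sigma^m(x)=\sigma^n(y)\}$ with $(x,k,y)(y,l,z)=(x,k+l,z)$, $(x,k,y)^{-1}=(y,-k,x)$, topology generated by $\{(x,m-n,y):x\in U,y\in V,\sigma^m(x)=\sigma^n(y)\}$ for open $U,V$ on which $\sigma^m,\sigma^n$ are injective with $\sigma^m(U)=\sigma^n(V)$. *)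

(* Defs.v *)
From HB Require Import structures.
From mathcomp Require Import all_boot all_order all_algebra.
From mathcomp Require Import all_classical all_reals all_analysis.
From mathcomp Require Import zify ring lra.

Set Implicit Arguments.
Unset Strict Implicit.
Unset Printing Implicit Defensive.

Import Order.TTheory GRing.Theory Num.Theory.
Local Open Scope classical_set_scope.
Local Open Scope ring_scope.

(* is a total function whose values only matter on composable pairs.   *)

Record gpd_ops (G : Type) := GpdOps {
  gsrc : G -> G ;
  grng : G -> G ;
  gmul : G -> G -> G ;
  ginv : G -> G }.

Section Groupoid.
Context {G : Type} (o : gpd_ops G).

Definition units : set G := [set g | gsrc o g = g].

Definition composable (g h : G) : Prop := gsrc o g = grng o h.

Definition is_groupoid : Prop :=
  [/\ (forall g, gsrc o (gsrc o g) = gsrc o g /\ grng o (gsrc o g) = gsrc o g),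
      (forall g, gsrc o (grng o g) = grng o g /\ grng o (grng o g) = grng o g),
      (forall g h, composable g h ->
         gsrc o (gmul o g h) = gsrc o h /\ grng o (gmul o g h) = grng o g),
      (forall g h k, composable g h -> composable h k ->
         gmul o (gmul o g h) k = gmul o g (gmul o h k)) &
    (forall g, gmul o (grng o g) g = g /\ gmul o g (gsrc o g) = g) /\
      (forall g, [/\ gsrc o (ginv o g) = grng o g, grng o (ginv o g) = gsrc o g,
                    gmul o g (ginv o g) = grng o g &
                    gmul o (ginv o g) g = gsrc o g])].

Definition isotropy : set G := [set g | gsrc o g = grng o g].

End Groupoid.

Section Topo.
Context {T : topologicalType}.

Definition open_in (A B : set T) : Prop :=
  exists2 O, open O & B = O `&` A.

Definition rel_hausdorff (A : set T) : Prop :=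
  forall x y, A x -> A y -> x <> y ->
    exists U V, [/\ open_in A U, open_in A V, U x, V y & U `&` V = set0].

Definition rel_second_countable (A : set T) : Prop :=
  exists B : set (set T), [/\ countable B, (forall U, B U -> open_in A U) &
    forall x W, A x -> open_in A W -> W x -> exists2 U, B U & U x /\ U `<=` W].

Definition rel_compact_open_basis (A : set T) : Prop :=
  forall x W, A x -> open_in A W -> W x ->
    exists K, [/\ open_in A K, compact K, K x & K `<=` W].

Definition rel_no_isolated_points (A : set T) : Prop :=
  forall x W, A x -> open_in A W -> W x -> exists2 y, W y & y <> x.

Definition locally_compact_cantor (A : set T) : Prop :=
  [/\ A !=set0, rel_second_countable A, rel_hausdorff A,
      rel_compact_open_basis A & rel_no_isolated_points A].

End Topo.

Definition local_homeo {T U : topologicalType} (f : T -> U) : Prop :=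
  continuous f /\
  forall x, exists U0 : set T, [/\ open U0, U0 x,
    (forall a b, U0 a -> U0 b -> f a = f b -> a = b) &
    (forall V, open V -> V `<=` U0 -> open (f @` V))].

Section TopGroupoid.
Context {G : topologicalType} (o : gpd_ops G).

Definition topological_groupoid : Prop :=
  [/\ is_groupoid o,
      {within [set p : G * G | composable o p.1 p.2],
         continuous (fun p : G * G => gmul o p.1 p.2)},
      continuous (ginv o), continuous (gsrc o) & continuous (grng o)].

Definition etale : Prop := topological_groupoid /\ local_homeo (grng o).

Definition ample : Prop :=
  [/\ etale, rel_hausdorff (units o) & rel_compact_open_basis (units o)].

Definition effective : Prop := interior (isotropy o) = units o.

End TopGroupoid.

Definition gpd_hom {H G : Type} (oH : gpd_ops H) (oG : gpd_ops G)
  (f : H -> G) : Prop :=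
  forall g h, composable oH g h ->
    composable oG (f g) (f h) /\ f (gmul oH g h) = gmul oG (f g) (f h).

Definition embeds {H G : topologicalType} (oH : gpd_ops H) (oG : gpd_ops G)
  : Prop :=
  exists f : H -> G, [/\ injective f, gpd_hom oH oG f & local_homeo f].

(* The product H x R with R = N x N (discrete pair groupoid)            *)

Definition prodR_ops {H : Type} (o : gpd_ops H) : gpd_ops (H * (nat * nat)) :=
  @GpdOps (H * (nat * nat))
    (fun g => (gsrc o g.1, (g.2.2, g.2.2)))
    (fun g => (grng o g.1, (g.2.1, g.2.1)))
    (fun g h => (gmul o g.1 h.1, (g.2.1, h.2.2)))
    (fun g => (ginv o g.1, (g.2.2, g.2.1))).

(* E_2^oo = infinite words in {a,b} = nat -> bool with the product
   (cylinder) topology *)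
Definition E2inf := cantor_space.

Definition shift (x : E2inf) : E2inf := fun i => x i.+1.

Definition E2rel (x : E2inf) (k : int) (y : E2inf) : Prop :=
  exists m n : nat, k = m%:Z - n%:Z /\ iter m shift x = iter n shift y.

Record GE2 := MkGE2 {
  ge_x : E2inf ; ge_k : int ; ge_y : E2inf ; ge_prop : E2rel ge_x ge_k ge_y }.

HB.instance Definition _ := gen_eqMixin GE2.
HB.instance Definition _ := gen_choiceMixin GE2.

Lemma E2rel_refl x : E2rel x 0 x.
Proof. by exists 0%N, 0%N. Qed.

Lemma E2rel_sym x k y : E2rel x k y -> E2rel y (- k) x.
Proof. by case=> m [n [-> e]]; exists n, m; split; [rewrite opprB|]. Qed.

Lemma iter_shiftD m n x : iter (m + n) shift x = iter m shift (iter n shift x).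
Proof. by rewrite iterD. Qed.

Lemma E2rel_trans x k y l z : E2rel x k y -> E2rel y l z -> E2rel x (k + l) z.
Proof.
case=> m [n [-> e1]] [p [q [-> e2]]]; exists (p + m)%N, (n + q)%N; split.
  by rewrite !PoszD; lia.
by rewrite iterD e1 -iterD addnC iterD e2 -iterD.
Qed.

Definition ge_src (g : GE2) : GE2 := MkGE2 (E2rel_refl (ge_y g)).
Definition ge_rng (g : GE2) : GE2 := MkGE2 (E2rel_refl (ge_x g)).
Definition ge_inv (g : GE2) : GE2 := MkGE2 (E2rel_sym (ge_prop g)).
Definition ge_mul (g h : GE2) : GE2 :=
  match pselect (ge_y g = ge_x h) with
  | left e =>
      MkGE2 (E2rel_trans (ge_prop g)
               (eq_rect_r (fun u => E2rel u (ge_k h) (ge_y h)) (ge_prop h) e))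
  | right _ => g
  end.

Definition GE2_ops : gpd_ops GE2 := GpdOps ge_src ge_rng ge_mul ge_inv.

Definition ge_index := (nat * nat * set E2inf * set E2inf)%type.

Definition ge_basic_ok (i : ge_index) : Prop :=
  let: (m, n, U, V) := i in
  [/\ open U, open V,
      (forall a b, U a -> U b -> iter m shift a = iter m shift b -> a = b),
      (forall a b, V a -> V b -> iter n shift a = iter n shift b -> a = b) &
      iter m shift @` U = iter n shift @` V].

Definition ge_basic (i : ge_index) : set GE2 :=
  let: (m, n, U, V) := i in
  [set g | [/\ U (ge_x g), V (ge_y g), ge_k g = m%:Z - n%:Z &
               iter m shift (ge_x g) = iter n shift (ge_y g)]].

HB.instance Definition _ :=
  @isSubBaseTopological.Build GE2 ge_index ge_basic_ok ge_basic.

(* Main.v *)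
Require Import Defs.
From HB Require Import structures.
From mathcomp Require Import all_boot all_order all_algebra.
From mathcomp Require Import all_classical all_reals all_analysis.
From mathcomp Require Import zify ring lra finmap.
Set Implicit Arguments.
Unset Strict Implicit.
Unset Printing Implicit Defensive.
Import Order.TTheory GRing.Theory Num.Theory.
Local Open Scope classical_set_scope.

Lemma iter_shiftE p (x : E2inf) : iter p Defs.shift x = (fun i : nat => x (addn i p)).
Proof.
elim: p => [|p IH] /=; first by apply: funext => i; rewrite addn0.
by rewrite IH; apply: funext => i; rewrite /Defs.shift addSnnS.
Qed.

Lemma sh_eqP p q (x y : E2inf) :
  iter p Defs.shift x = iter q Defs.shift y <-> (forall i : nat, x (addn i p) = y (addn i q)).
Proof.
rewrite !iter_shiftE; split=> [e i|e]; last by apply: funext.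
by have := congr1 (fun f => f i) e.
Qed.

Definition pre (m : nat) (x : E2inf) : E2inf :=
  fun i => if (i < m)%N then false else if i == m then true else x (i - m.+1)%N.

Lemma pre_shift m x i : pre m x (i + m.+1)%N = x i.
Proof.
rewrite /pre; have -> : (i + m.+1 < m)%N = false by lia.
have -> : (i + m.+1 == m) = false by lia.
by rewrite addnK.
Qed.

Lemma shift_pre m x : iter m.+1 Defs.shift (pre m x) = x.
Proof. by rewrite iter_shiftE; apply: funext => i; rewrite pre_shift. Qed.

Lemma pre_inj m m' x x' : pre m x = pre m' x' -> m = m' /\ x = x'.
Proof.
move=> e.
have mm : m = m'.
  have e1 := congr1 (fun f => f m) e; have e2 := congr1 (fun f => f m') e.
  rewrite /pre /= !ltnn !eqxx in e1 e2.
  case: (ltngtP m m') => [h|h|//].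
  - by rewrite h in e1.
  - by rewrite h in e2.
subst m'; split => //.
by apply: funext => i; rewrite -(pre_shift m x i) -(pre_shift m x' i) e.
Qed.

Lemma ge_eq (g h : GE2) :
  ge_x g = ge_x h -> ge_k g = ge_k h -> ge_y g = ge_y h -> g = h.
Proof.
case: g => x k y P; case: h => x' k' y' P' /= ex ek ey; subst.
by rewrite (Prop_irrelevance P P').
Qed.

Lemma ge_mulE (g h : GE2) : ge_y g = ge_x h ->
  [/\ ge_x (ge_mul g h) = ge_x g, ge_k (ge_mul g h) = (ge_k g + ge_k h)%R &
      ge_y (ge_mul g h) = ge_y h].
Proof. by move=> e; rewrite /ge_mul; case: pselect. Qed.

Lemma phi_prop (g : GE2) (m n : nat) :
  E2rel (pre m (ge_x g)) (ge_k g + m%:Z - n%:Z)%R (pre n (ge_y g)).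
Proof.
case: g => x k y P /=; case: P => p [q [-> e]].
exists (p + m.+1)%N, (q + n.+1)%N; split; first by rewrite !PoszD; lia.
by rewrite !iterD !shift_pre.
Qed.

Definition phi (m n : nat) (g : GE2) : GE2 := MkGE2 (phi_prop g m n).
Definition cyl (x : E2inf) (L : nat) : set E2inf :=
  [set z | forall i, (i < L)%N -> z i = x i].

Lemma cyl_nbhs (x : E2inf) L : nbhs x (cyl x L).
Proof.
elim: L => [|L IH]; first by apply: filterS filterT => z _ i; rewrite ltn0.
have o : open (proj L @^-1` [set x L] : set E2inf).
  apply: open_comp; [move=> + _; exact: proj_continuous | exact: discrete_open].
have : nbhs x (cyl x L `&` (proj L @^-1` [set x L])).
  by apply: filterI => //; apply: open_nbhs_nbhs; split.
apply: filterS => z [zc zL] i; rewrite ltnS leq_eqVlt => /predU1P[->|]; first by [].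
exact: zc.
Qed.

Lemma cyl_open x L : open (cyl x L).
Proof.
rewrite openE => z zc; have e : cyl z L = cyl x L.
  by apply/seteqP; split=> w wc i iL; rewrite wc // zc.
by rewrite /interior -e; exact: cyl_nbhs.
Qed.

Lemma cyl_mono x L L' : (L <= L')%N -> cyl x L' `<=` cyl x L.
Proof. by move=> h z zc i iL; apply: zc; apply: leq_trans h. Qed.

Lemma open_cyl_sub (U : set E2inf) x : open U -> U x -> exists L, cyl x L `<=` U.
Proof.
move=> oU Ux.
pose F := filter_from [set: nat] (cyl x).
have FF : Filter F.
  apply: filter_from_filter; first by exists 0%N.
  move=> i j _ _; exists (maxn i j) => // z zc; split;
    apply: (cyl_mono _ zc); [exact: leq_maxl | exact: leq_maxr].
have : F --> x.
  apply/pointwise_cvgP => t A At.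
  exists t.+1 => // z zc; rewrite /= (zc t (ltnSn t)).
  exact: nbhs_singleton.
move=> /(_ U); rewrite nbhsE; case=> [|L _ h]; first by exists U.
by exists L.
Qed.
Lemma open_local {T : topologicalType} (A : set T) :
  (forall z, A z -> exists B, [/\ open B, B z & B `<=` A]) -> open A.
Proof.
move=> h; rewrite openE => z /h [B [oB Bz BA]].
by apply: filterS BA _; apply: open_nbhs_nbhs; split.
Qed.

Lemma finI_open (A : set GE2) : finI_from ge_basic_ok ge_basic A -> open A.
Proof. move=> h; exists [set A]; first by move=> _ ->. by rewrite bigcup_set1. Qed.

Lemma basic_open i : ge_basic_ok i -> open (ge_basic i).
Proof. by move=> h; apply: finI_open; apply: finI_from1. Qed.

Lemma GE2_openE (O : set GE2) : open O ->
  exists2 D : set (set GE2), D `<=` finI_from ge_basic_ok ge_basic &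
    O = \bigcup_(A in D) A.
Proof. by case=> D DI e; exists D => //; rewrite -e. Qed.

Lemma open_bigcap_seq {T : topologicalType} {I : eqType} (s : seq I) (f : I -> set T) :
  (forall i, i \in s -> open (f i)) -> open (\bigcap_(i in [set x | x \in s]) f i).
Proof.
elim: s => [|a s IH] h.
  have -> : \bigcap_(i in [set x | x \in [::]]) f i = setT.
    by apply/seteqP; split => // z _ i.
  exact: openT.
have -> : \bigcap_(i in [set x | x \in a :: s]) f i =
  f a `&` \bigcap_(i in [set x | x \in s]) f i.
  apply/seteqP; split => z.
    by move=> hz; split; [apply: hz; rewrite /= mem_head|
      move=> i /= hi; apply: hz; rewrite /= in_cons hi orbT].
  by case=> za zs i /=; rewrite in_cons => /orP[/eqP->//|hi]; apply: zs.
apply: openI; first by apply: h; rewrite mem_head.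
by apply: IH => i hi; apply: h; rewrite in_cons hi orbT.
Qed.

Lemma open_bigcap_fset {T : topologicalType} {I : choiceType} (F : {fset I}) (f : I -> set T) :
  (forall i, i \in F -> open (f i)) -> open (\bigcap_(i in [set` F]) f i).
Proof. move=> h; exact: (open_bigcap_seq (s := enum_fset F)). Qed.
Notation sh p := (iter p Defs.shift).

Lemma sh_inj_cyl p (x : E2inf) L a b :
  cyl x (p + L) a -> cyl x (p + L) b -> sh p a = sh p b -> a = b.
Proof.
move=> ha hb /sh_eqP e; apply: funext => i.
case: (ltnP i p) => h.
  by rewrite ha ?hb //; apply: leq_trans (leq_addr _ _).
by have := e (i - p)%N; rewrite subnK.
Qed.

Lemma sh_img_sub p q (x y : E2inf) L : sh p x = sh q y ->
  sh p @` cyl x (p + L) `<=` sh q @` cyl y (q + L).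
Proof.
move=> /sh_eqP e _ [a ha <-].
exists (fun i : nat => if (i < q)%N then y i else a (addn (i - q) p)).
  move=> i iL /=; case: ifP => // /negbT; rewrite -leqNgt => qi.
  rewrite ha; last by lia.
  by have := e (i - q)%N; rewrite subnK.
rewrite !iter_shiftE; apply: funext => i /=.
have -> : (addn i q < q)%N = false by lia.
by rewrite addnK.
Qed.

Definition Nb (g : GE2) p q L : ge_index :=
  (p, q, cyl (ge_x g) (p + L), cyl (ge_y g) (q + L)).

Lemma Nb_ok g p q L : sh p (ge_x g) = sh q (ge_y g) -> ge_basic_ok (Nb g p q L).
Proof.
move=> e; split; try exact: cyl_open.
- by move=> a b; apply: sh_inj_cyl.
- by move=> a b; apply: sh_inj_cyl.
- apply/seteqP; split; first exact: sh_img_sub.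
  exact: sh_img_sub.
Qed.

Lemma Nb_mem g p q L : ge_k g = (p%:Z - q%:Z)%R -> sh p (ge_x g) = sh q (ge_y g) ->
  ge_basic (Nb g p q L) g.
Proof. by move=> ek e; split. Qed.

Lemma ge_wit (g : GE2) : exists p q : nat,
  ge_k g = (p%:Z - q%:Z)%R /\ sh p (ge_x g) = sh q (ge_y g).
Proof. by case: g => x k y [p [q [ek e]]]; exists p, q. Qed.
Lemma pre_cyl m (x z : E2inf) L : cyl x L z -> cyl (pre m x) (m.+1 + L) (pre m z).
Proof.
move=> h i iL; rewrite /pre; case: ltnP => // mi; case: eqP => // /eqP ne.
by rewrite h //; lia.
Qed.

Lemma pre_of_cyl m (x w : E2inf) : cyl (pre m x) m.+1 w -> w = pre m (sh m.+1 w).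
Proof.
move=> h; apply: funext => i; rewrite iter_shiftE /pre.
case: (ltnP i m) => mi.
  have := h i (ltnW mi); rewrite /pre mi; done.
case: (eqVneq i m) => [->|ne].
  have := h m (ltnSn m); rewrite /pre ltnn eqxx; done.
have -> : addn (i - m.+1) m.+1 = i by lia.
done.
Qed.

Lemma pre_open m (U : set E2inf) : open U -> open (pre m @` U).
Proof.
move=> oU; apply: open_local => _ [x Ux <-].
have [L hL] := open_cyl_sub oU Ux.
exists (cyl (pre m x) (m.+1 + L)); split; [exact: cyl_open| |].
  by move=> i _.
move=> w hw; exists (sh m.+1 w); last first.
  by rewrite -(@pre_of_cyl m x) //; apply: cyl_mono hw; exact: leq_addr.
apply: hL => i iL; rewrite iter_shiftE.
have := hw (i + m.+1)%N; rewrite pre_shift => -> //; last by lia.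
Qed.

Definition tr m n (i : ge_index) : ge_index :=
  let: (p, q, U, V) := i in (p + m.+1, q + n.+1, pre m @` U, pre n @` V)%N.

Lemma sh_pre p m x : sh (p + m.+1)%N (pre m x) = sh p x.
Proof. by rewrite iterD shift_pre. Qed.

Lemma tr_ok m n i : ge_basic_ok i -> ge_basic_ok (tr m n i).
Proof.
case: i => [[[p q] U] V] [oU oV iU iV e]; split.
- exact: pre_open.
- exact: pre_open.
- move=> _ _ [a Ua <-] [b Ub <-]; rewrite !sh_pre => h.
  by rewrite (iU a b Ua Ub h).
- move=> _ _ [a Ua <-] [b Ub <-]; rewrite !sh_pre => h.
  by rewrite (iV a b Ua Ub h).
- apply/seteqP; split => _ [_ [a Ua <-] <-]; rewrite sh_pre.
  + have : (sh q @` V) (sh p a) by rewrite -e; exists a.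
    by case=> b Vb <-; exists (pre n b); [exists b|rewrite sh_pre].
  + have : (sh p @` U) (sh q a) by rewrite e; exists a.
    by case=> b Ub <-; exists (pre m b); [exists b|rewrite sh_pre].
Qed.

Lemma phi_basic m n i : phi m n @` ge_basic i = ge_basic (tr m n i).
Proof.
case: i => [[[p q] U] V]; apply/seteqP; split.
  move=> _ [g [Ux Vy ek e] <-]; split => /=.
  - by exists (ge_x g).
  - by exists (ge_y g).
  - by rewrite ek !PoszD; lia.
  - by rewrite !sh_pre.
case=> x' k' y' P' [[x Ux ex] [y Vy ey] ek e] /=.
simpl in *; subst x' y'.
rewrite !sh_pre in e.
have Pr : E2rel x (p%:Z - q%:Z)%R y by exists p, q.
exists (MkGE2 Pr); first by split.
apply: ge_eq => //=; rewrite ek !PoszD; lia.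
Qed.

Lemma phi_inj m n : injective (phi m n).
Proof.
move=> g g' e.
have [_ ex] := pre_inj (congr1 ge_x e).
have [_ ey] := pre_inj (congr1 ge_y e).
have ek := congr1 ge_k e; simpl in ek.
apply: ge_eq => //; lia.
Qed.
Lemma phi_range_open m n : open (range (phi m n)).
Proof.
apply: open_local => _ [g _ <-].
have [p [q [ek e]]] := ge_wit g.
exists (ge_basic (tr m n (Nb g p q 0))); split.
- exact/basic_open/tr_ok/Nb_ok.
- by rewrite -phi_basic; exists g => //; exact: Nb_mem.
- by rewrite -phi_basic => _ [g' _ <-]; exists g'.
Qed.

Lemma phi_open m n (O : set GE2) : open O -> open (phi m n @` O).
Proof.
move=> /GE2_openE [D DI eO]; apply: open_local => _ [g Og <-].
move: Og; rewrite eO => -[A DA Ag].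
have [F FD eA] := DI A DA.
exists (range (phi m n) `&` \bigcap_(i in [set` F]) ge_basic (tr m n i)); split.
- apply: openI; first exact: phi_range_open.
  apply: open_bigcap_fset => i iF; apply/basic_open/tr_ok.
  by exact: set_mem (FD i iF).
- split; first by exists g.
  move=> i iF; rewrite -phi_basic; exists g => //.
  by move: Ag; rewrite -eA; apply.
- move=> _ [[g' _ <-] h]; exists g' => //; exists A => //.
  rewrite -eA => i iF; have := h i iF; rewrite -phi_basic.
  by case=> g'' hg'' /phi_inj <-.
Qed.

Lemma phi_pre_basic_open m n i : ge_basic_ok i -> open (phi m n @^-1` ge_basic i).
Proof.
case: i => [[[p q] U] V] [oU oV _ _ _]; apply: open_local => g.
case=> /= hU hV ek /sh_eqP e.
have [L1 h1] := open_cyl_sub oU hU.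
have [L2 h2] := open_cyl_sub oV hV.
pose L := (L1 + L2)%N; pose P := (p + n)%N; pose Q := (q + m)%N.
have eP : sh P (ge_x g) = sh Q (ge_y g).
  apply/sh_eqP => j.
  have := e (j + n.+1 + m)%N.
  have -> : (j + n.+1 + m + p = (j + P) + m.+1)%N by rewrite /P; lia.
  have -> : (j + n.+1 + m + q = (j + Q) + n.+1)%N by rewrite /Q; lia.
  by rewrite !pre_shift.
have kP : ge_k g = (P%:Z - Q%:Z)%R.
  by move: ek; rewrite /P /Q !PoszD; lia.
exists (ge_basic (Nb g P Q L)); split.
- exact/basic_open/Nb_ok.
- exact: Nb_mem.
case=> x' k' y' pr [/= cx cy ek' /sh_eqP e'] /=.
have cx' := pre_cyl (m:=m) cx; have cy' := pre_cyl (m:=n) cy.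
split => /=.
- by apply: h1; apply: cyl_mono cx'; rewrite /L; lia.
- by apply: h2; apply: cyl_mono cy'; rewrite /L; lia.
- by rewrite ek' /P /Q !PoszD; lia.
apply/sh_eqP => j.
case: (ltnP j (m + n).+1) => hj.
  rewrite cx' /=; last by rewrite /P /L; lia.
  rewrite cy' /=; last by rewrite /Q /L; lia.
  exact: e.
have -> : (j + p = (j - (m + n).+1 + P) + m.+1)%N by rewrite /P; lia.
have -> : (j + q = (j - (m + n).+1 + Q) + n.+1)%N by rewrite /Q; lia.
by rewrite !pre_shift.
Qed.

Lemma phi_cont m n : continuous (phi m n).
Proof.
apply/continuousP => A /GE2_openE [D DI ->].
rewrite preimage_bigcup; apply: bigcup_open => B DB.
have [F FD <-] := DI B DB.
rewrite preimage_bigcap; apply: open_bigcap_fset => i iF.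
by apply: phi_pre_basic_open; exact: set_mem (FD i iF).
Qed.
Lemma prod_nbhs_mk {X Y : topologicalType} (a : X) (b : Y) P Q A :
  nbhs a P -> nbhs b Q -> P `*` Q `<=` A -> nbhs (a,b) A.
Proof. move=> hP hQ hA. exists (P, Q) => //. Qed.

Lemma nn_nbhs (mn : nat * nat) : nbhs mn [set mn].
Proof.
case: mn => m n; apply: (@prod_nbhs_mk _ _ m n [set m] [set n]) => //.
by move=> [a b] [/= -> ->].
Qed.

Lemma open_setX1 {X : topologicalType} (V : set X) (mn : nat * nat) :
  open V -> open (V `*` [set mn]).
Proof.
move=> oV; rewrite openE => -[a b] [/= Va ->].
apply: (prod_nbhs_mk (P := V) (Q := [set mn])) => //.
  by apply: open_nbhs_nbhs; split.
exact: nn_nbhs.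
Qed.

Lemma incl_cont {X : topologicalType} (mn : nat * nat) :
  continuous (fun h : X => (h, mn)).
Proof.
move=> h A [[P Q] [/= hP hQ] PQA].
apply: filterS hP => x Px; apply: PQA; split => //; exact: nbhs_singleton hQ.
Qed.

Section Main.
Context (H : topologicalType) (o : gpd_ops H).

Lemma embed_down : embeds (prodR_ops o) GE2_ops -> embeds o GE2_ops.
Proof.
case=> f [fi fh [fc fl]].
exists (fun h => f (h, (0, 0)%N)); split.
- by move=> a b /fi [].
- move=> g h c; have [] := fh (g, (0, 0)%N) (h, (0, 0)%N).
    by rewrite /composable /= c.
  by move=> c' e; split.
- split.
    move=> h; apply: (@continuous_comp _ _ _ (fun h : H => (h, (0, 0)%N)) f).
      exact: incl_cont.
    exact: fc.
  move=> h; have [U0 [oU0 U0h inj op]] := fl (h, (0, 0)%N).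
  exists ((fun h : H => (h, (0, 0)%N)) @^-1` U0); split => //.
  + by move/continuousP: (@incl_cont H (0, 0)%N); apply.
  + by move=> a b Ua Ub e; case: (inj _ _ Ua Ub e).
  + move=> V oV VU.
    have -> : (fun h => f (h, (0, 0)%N)) @` V = f @` (V `*` [set (0, 0)%N]).
      apply/seteqP; split => z.
        by case=> a Va <-; exists (a, (0, 0)%N).
      by case=> -[a mn] [/= Va ->] <-; exists a.
    apply: op; first exact: open_setX1.
    by move=> [a mn] [/= Va ->]; apply: VU.
Qed.

Definition psi (f : H -> GE2) (z : H * (nat * nat)) : GE2 := phi z.2.1 z.2.2 (f z.1).

Lemma embed_up : embeds o GE2_ops -> embeds (prodR_ops o) GE2_ops.
Proof.
case=> f [fi fh [fc fl]].
have psi_inj : injective (psi f).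
  move=> [a [m n]] [b [m' n']] e; rewrite /psi /= in e.
  have [em ex] := pre_inj (congr1 ge_x e).
  have [en ey] := pre_inj (congr1 ge_y e).
  have ek := congr1 ge_k e; simpl in ek; subst m' n'.
  have -> : a = b by apply: fi; apply: ge_eq => //; lia.
  by [].
exists (psi f); split => //.
- move=> [a [m1 n1]] [b [m2 n2]]; rewrite /composable /= => -[c e].
  have [c' ef] := fh a b c.
  have ey : ge_y (f a) = ge_x (f b) by exact: (congr1 ge_x c').
  have ec : composable GE2_ops (psi f (a, (m1, n1))) (psi f (b, (m2, n2))).
    by rewrite /composable; apply: ge_eq => //=; rewrite e ey.
  split => //; rewrite /psi /= ef.
  have ec' : ge_y (psi f (a, (m1, n1))) = ge_x (psi f (b, (m2, n2))).
    exact: (congr1 ge_x ec).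
  have [x1 k1 y1] := ge_mulE ey.
  have [x2 k2 y2] := ge_mulE ec'.
  apply: ge_eq => /=.
  + by rewrite x2 x1.
  + by rewrite k2 k1 /= e; lia.
  + by rewrite y2 y1.
- split.
    move=> [h [m n]] A hA.
    have hP : nbhs h (f @^-1` (phi m n @^-1` A)).
      by apply: (fc h); exact: (@phi_cont m n (f h) A hA).
    apply: (prod_nbhs_mk hP (nn_nbhs (m, n))).
    by move=> [h' mn'] [/= hh ->].
  move=> [h [m n]]; have [U0 [oU0 U0h inj op]] := fl h.
  exists (U0 `*` [set (m, n)]); split => //.
  + exact: open_setX1.
  + by move=> a b _ _; apply: psi_inj.
  + move=> V oV VU.
    pose Vs := (fun h' : H => (h', (m, n))) @^-1` V.
    have oVs : open Vs by move/continuousP: (@incl_cont H (m, n)); apply.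
    have -> : psi f @` V = phi m n @` (f @` Vs).
      apply/seteqP; split => z.
        case=> -[a mn] Va <-; have [/= _ emn] := VU _ Va; subst mn.
        by exists (f a) => //; exists a.
      by case=> _ [a Va <-] <-; exists (a, (m, n)).
    apply: phi_open; apply: op => // a Va.
    by have [] := VU _ Va.
Qed.

End Main.

Theorem proposition11p14 (H : topologicalType) (o : gpd_ops H) :
  effective o -> ample o -> @second_countable H -> hausdorff_space H ->
  locally_compact_cantor (units o) ->
  (embeds o GE2_ops <-> embeds (prodR_ops o) GE2_ops).
Proof.
move=> _ _ _ _ _; split; [exact: embed_up | exact: embed_down].
Qed.
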